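(* Let $d,N,m\ge1$ be integers and let $x_1,\dots,x_m$ be independent random variables uniformly distributed on $\Gamma_N^d$. Let $\mu_m=\frac1m\sum_{\nu=1}^m\delta_{x_\nu}$ and let $h\ge1$. Then the event $$\max_{u\in\Gamma_N^d\setminus\{0\}}|\widehat{\mu_m}(Nu)|\le\frac{4\log^{1/2}(8N^{d+h})}{m^{1/2}}$$ has probability at least $1-N^{-h}$.
   Context: $\Gamma_N=\{k/N:k=0,\dots,N-1\}\subset\mathbb T=\mathbb R/\mathbb Z$ and $\Gamma_N^d$ is its $d$-fold product. For $u\in\Gamma_N^d$, $\widehat{\mu_m}(Nu)=\frac1m\sum_{j=1}^m e^{-2\pi iN\langle u,x_j\rangle}$ (with $\mathbb T$ identified with $[0,1)$). *)

(* Defs.v *)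
From HB Require Import structures.
From mathcomp Require Import all_boot all_order all_algebra.
From mathcomp Require Import all_classical all_reals all_analysis.
From mathcomp Require Import complex.
Set Implicit Arguments. Unset Strict Implicit. Unset Printing Implicit Defensive.
Import Order.TTheory GRing.Theory Num.Theory.
Local Open Scope ring_scope.
Local Open Scope complex_scope.

(* A point of Gamma_N^d = {k/N : k = 0..N-1}^d is encoded by its integer
   numerators k : {ffun 'I_d -> 'I_N}; its real coordinates (T identified
   with [0,1)) are k_i / N. *)
Definition grid_pt (R : realType) (d N : nat) (k : {ffun 'I_d -> 'I_N}) (i : 'I_d) : R :=
  (nat_of_ord (k i))%:R / N%:R.

Definition gdot (R : realType) (d N : nat) (u x : {ffun 'I_d -> 'I_N}) : R :=
  \sum_(i < d) grid_pt R u i * grid_pt R x i.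

Definition expm2pi (R : realType) (t : R) : R[i] :=
  (cos (2 * pi * t)) +i* (- sin (2 * pi * t)).

Definition mu_hat (R : realType) (d N m : nat)
    (x : {ffun 'I_m -> {ffun 'I_d -> 'I_N}}) (u : {ffun 'I_d -> 'I_N}) : R[i] :=
  (m%:R)^-1 * \sum_(j < m) expm2pi (N%:R * gdot R u (x j)).

Definition grid0 (d N : nat) (HN : (0 < N)%N) : {ffun 'I_d -> 'I_N} :=
  [ffun _ => Ordinal HN].

(* Probability of an event for m independent uniform points on Gamma_N^d,
   i.e. the uniform probability on the product space (Gamma_N^d)^m. *)
Definition unif_prob (R : realType) (T : finType) (E : {set T}) : R :=
  #|E|%:R / #|T|%:R.

(* Main.v *)
Require Import Defs.
From HB Require Import structures.
From mathcomp Require Import all_boot all_order all_algebra.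
From mathcomp Require Import all_classical all_reals all_analysis.
From mathcomp Require Import complex.
From mathcomp Require Import ring lra.
Import Order.TTheory GRing.Theory Num.Theory.
Local Open Scope ring_scope.
Local Open Scope complex_scope.

Section Helpers.
Variable R : realType.

Lemma exp_quad (z : R) : z <= 1/2 -> expR z <= 1 + z + 2 * z ^+ 2.
Proof.
move=> hz.
have hp : 0 < 1 - z by lra.
have h1 := expR_ge1Dx (- z).
have e := expRxMexpNx_1 z.
rewrite -(ler_pM2r hp).
apply: (@le_trans _ _ 1).
  rewrite -[X in _ <= X]e; apply: ler_wpM2l; [exact: expR_ge0| lra].
have h2 : 0 <= z ^+ 2 * (1 - 2 * z) by apply: mulr_ge0; [exact: sqr_ge0| lra].
have -> : (1 + z + 2 * z ^+ 2) * (1 - z) = 1 + z ^+ 2 * (1 - 2 * z) - z ^+ 3 + z ^+ 3 by ring.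
lra.
Qed.

Lemma chernoff_count (T : finType) (m : nat) (Y : T -> R) (s : R) :
  (forall y, `|Y y| <= 1) -> \sum_y Y y = 0 -> 0 <= s ->
  #|[set x : {ffun 'I_m -> T} | m%:R * s < \sum_j Y (x j)]|%:R
    <= (#|T|%:R ^+ m) * expR (- (m%:R * s ^+ 2 / 8)).
Proof.
move=> hY h0 hs0.
have rhs0 : 0 <= (#|T|%:R ^+ m) * expR (- (m%:R * s ^+ 2 / 8)).
  by apply: mulr_ge0; [apply: exprn_ge0; apply: ler0n | exact: expR_ge0].
case: (lerP 1 s) => hs.
  suff -> : [set x : {ffun 'I_m -> T} | m%:R * s < \sum_j Y (x j)] = finset.set0 by rewrite cards0.
  apply/setP => x; rewrite !inE; apply/negbTE; rewrite -leNgt.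
  apply: (@le_trans _ _ (\sum_(j < m) (1 : R))).
    apply: ler_sum => j _; apply: le_trans (hY _); exact: ler_norm.
  rewrite sumr_const card_ord -mulr_natl mulr1.
  rewrite -[X in X <= _]mulr1; apply: ler_wpM2l => //; exact: ler0n.
pose l := s / 4.
have hl0 : 0 <= l by rewrite /l; lra.
have hl1 : l <= 1/2 by rewrite /l; lra.
set A := [set x | _].
have step1 : #|A|%:R <= \sum_(x : {ffun 'I_m -> T}) expR (l * (\sum_j Y (x j) - m%:R * s)).
  rewrite -sumr_const.
  apply: (@le_trans _ _ (\sum_(x in A) expR (l * (\sum_j Y (x j) - m%:R * s)))).
    apply: ler_sum => x; rewrite inE => hx.
    apply: le_trans (expR_ge1Dx _).
    have : 0 <= l * (\sum_j Y (x j) - m%:R * s) by apply: mulr_ge0 => //; lra.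
    lra.
  rewrite [X in _ <= X](bigID (fun x => x \in A)) /= lerDl.
  apply: sumr_ge0 => x _; exact: expR_ge0.
have step2 : \sum_(x : {ffun 'I_m -> T}) expR (l * (\sum_j Y (x j) - m%:R * s)) =
    expR (- (l * (m%:R * s))) * (\sum_y expR (l * Y y)) ^+ m.
  have e : (\sum_y expR (l * Y y)) ^+ m = \prod_(j < m) \sum_y expR (l * Y y)
    by rewrite prodr_const card_ord.
  rewrite e bigA_distr_bigA mulr_sumr.
  apply: eq_bigr => x _.
  rewrite -expR_sum -expRD; congr expR.
  rewrite mulrBr mulr_sumr; ring.
have step3 : \sum_y expR (l * Y y) <= #|T|%:R * expR (2 * l ^+ 2).
  apply: (@le_trans _ _ (\sum_y (1 + l * Y y + 2 * l ^+ 2))).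
    apply: ler_sum => y _.
    have := hY y; rewrite ler_norml => /andP [h1 h2].
    have hz : l * Y y <= 1/2.
      have : l * Y y <= l * 1 by apply: ler_wpM2l.
      lra.
    have h3 : (l * Y y) ^+ 2 <= l ^+ 2.
      rewrite exprMn -[X in _ <= X]mulr1; apply: ler_wpM2l; first exact: sqr_ge0.
      have : 0 <= (1 - Y y) * (1 + Y y) by apply: mulr_ge0; lra.
      nra.
    have := exp_quad _ hz.
    lra.
  rewrite big_split big_split /= -mulr_sumr h0 mulr0 addr0 sumr_const.
  have nE : forall (n : nat) (c : R), n%:R + c *+ n = n%:R * (1 + c).
    by move=> n c; rewrite mulrDr mulr1 mulr_natl.
  rewrite sumr_const nE.
  apply: ler_wpM2l; first exact: ler0n.
  exact: expR_ge1Dx.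
apply: le_trans step1 _; rewrite step2.
have step4 : (\sum_y expR (l * Y y)) ^+ m <= (#|T|%:R * expR (2 * l ^+ 2)) ^+ m.
  apply: lerXn2r => //; rewrite ?nnegrE //; apply: sumr_ge0 => y _; exact: expR_ge0.
apply: (le_trans (ler_wpM2l (expR_ge0 _) step4)).
rewrite exprMn mulrCA -expRM_natl -expRD.
rewrite le_eqVlt; apply/orP; left; apply/eqP; congr (_ * expR _); rewrite /l; field.
all: by [].
Qed.
Lemma expm2piD (a b : R) : expm2pi (a + b) = expm2pi a * expm2pi b.
Proof.
rewrite /expm2pi mulrDr cosD sinD.
simpc; congr (_ +i* _); ring.
Qed.

Lemma expm2pi0 : expm2pi (0 : R) = 1.
Proof. by rewrite /expm2pi mulr0 cos0 sin0 oppr0. Qed.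

Lemma expm2pi_muln (t : R) n : expm2pi (t *+ n) = expm2pi t ^+ n.
Proof.
elim: n => [|n IH]; first by rewrite mulr0n expr0 expm2pi0.
by rewrite mulrS expm2piD IH exprS.
Qed.

Lemma expm2pi1 : expm2pi (1 : R) = 1.
Proof. by rewrite /expm2pi mulr1 mulr_natl cos2pi sin2pi oppr0. Qed.

Lemma expm2pi_nat n : expm2pi (n%:R : R) = 1.
Proof. by rewrite expm2pi_muln expm2pi1 expr1n. Qed.

Lemma expm2pi_ne1 (a N : nat) : (0 < a)%N -> (a < N)%N -> expm2pi (a%:R / N%:R : R) != 1.
Proof.
move=> ha haN; apply/negP => /eqP E.
have : complex.Re (expm2pi (a%:R / N%:R : R)) = 1 by rewrite E.
rewrite /= .
set x := pi * (a%:R / N%:R) : R.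
have -> : 2 * pi * (a%:R / N%:R) = x *+ 2.
  by rewrite /x mulr2n; ring.
rewrite cos_mulr2n => hc.
have hx : 0 < x < pi.
  have hN : (0 : R) < N%:R by rewrite ltr0n; apply: leq_ltn_trans haN.
  have h1 : (0 : R) < a%:R / N%:R by apply: divr_gt0 hN; rewrite ltr0n.
  have h2 : (a%:R / N%:R : R) < 1 by rewrite ltr_pdivrMr // mul1r ltr_nat.
  rewrite /x; apply/andP; split; first by apply: mulr_gt0 => //; exact: pi_gt0.
  by rewrite -[X in _ < X]mulr1 ltr_pM2l ?pi_gt0.
have := sin_gt0_pi hx.
have := cos2Dsin2 x.
nra.
Qed.

Lemma sumc (I : Type) (r : seq I) (P : pred I) (F G : I -> R) :
  \sum_(i <- r | P i) (F i +i* G i) =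
  (\sum_(i <- r | P i) F i) +i* (\sum_(i <- r | P i) G i).
Proof.
elim: r => [|a r IH]; first by rewrite !big_nil.
by rewrite !big_cons; case: (P a) => //; rewrite IH.
Qed.

Lemma expm2pi_sum (d : nat) (f : 'I_d -> R) :
  expm2pi (\sum_(i < d) f i) = \prod_(i < d) expm2pi (f i).
Proof. exact: (big_morph _ expm2piD expm2pi0). Qed.

Lemma char_sum (d N : nat) (HN : (0 < N)%N) (u : {ffun 'I_d -> 'I_N}) :
  u != grid0 d HN -> \sum_(y : {ffun 'I_d -> 'I_N}) expm2pi (N%:R * gdot R u y) = 0.
Proof.
move=> hu.
have [i0 hi0] : exists i, u i != Ordinal HN.
  apply/existsP; apply: contraR hu => /existsPn h.
  apply/eqP/ffunP => i; rewrite ffunE; exact/eqP/negbNE/(h i).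
have ha : (0 < u i0)%N.
  rewrite lt0n; apply: contra hi0 => /eqP h; apply/eqP/val_inj => /=; exact: h.
have hN : (N%:R : R) != 0 by rewrite pnatr_eq0 -lt0n.
under eq_bigr => y _ do rewrite /gdot mulr_sumr expm2pi_sum.
pose F := fun (i : 'I_d) (k : 'I_N) => expm2pi (N%:R * (grid_pt R u i * ((k : nat)%:R / N%:R))).
transitivity (\sum_(y : {ffun 'I_d -> 'I_N}) \prod_(i < d) F i (y i)) => //.
rewrite -bigA_distr_bigA /=.
rewrite (bigD1 i0) //= .
suff -> : \sum_(j < N) F i0 j = 0 by rewrite mul0r.
pose w := expm2pi ((u i0 : nat)%:R / N%:R : R).
have eF : forall j : 'I_N, F i0 j = w ^+ j.
  move=> j; rewrite /F /w -expm2pi_muln -mulr_natr /grid_pt; congr expm2pi; field.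
  exact: hN.
under eq_bigr => j _ do rewrite eF.
have e1 := subrX1 w N.
have wN : w ^+ N = 1.
  rewrite /w -expm2pi_muln -(expm2pi_nat (u i0)); congr expm2pi; rewrite -mulr_natr; field; exact: hN.
rewrite wN subrr in e1.
have : (w - 1) * \sum_(i < N) w ^+ i == 0 by rewrite -e1.
rewrite mulf_eq0 subr_eq0 (negbTE (@expm2pi_ne1 (u i0) N ha (ltn_ord _))) /=.
by move/eqP.
Qed.

Definition th {d N : nat} (u y : {ffun 'I_d -> 'I_N}) : R := 2 * pi * (N%:R * gdot R u y).

Definition Yf {d N : nat} (u : {ffun 'I_d -> 'I_N}) (k : bool * bool)
  (y : {ffun 'I_d -> 'I_N}) : R :=
  (if k.1 then 1 else -1) * (if k.2 then cos (th u y) else sin (th u y)).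

Lemma Yf_bound d N u k y : `|@Yf d N u k y| <= 1.
Proof.
rewrite /Yf normrM; case: k => [[] []] /=; rewrite ?normrN1 ?normr1 mul1r;
  first [exact: cos_max | exact: sin_max].
Qed.

Lemma Yf_sum d N (HN : (0 < N)%N) u k : u != grid0 d HN -> \sum_y @Yf d N u k y = 0.
Proof.
move=> hu; have := @char_sum d N HN u hu.
under eq_bigr do rewrite /expm2pi.
rewrite sumc => /eqP; rewrite eq_complex /= => /andP [/eqP hc /eqP hs].
rewrite sumrN in hs; move/eqP: hs; rewrite oppr_eq0 => /eqP hs.
rewrite /Yf -mulr_sumr; case: k.2; rewrite /th ?hc ?hs mulr0 //.
Qed.

Lemma mu_hat_eq d N m (x : {ffun 'I_m -> {ffun 'I_d -> 'I_N}}) u : mu_hat R x u =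
  (m%:R^-1 * \sum_j cos (@th d N u (x j))) +i* (m%:R^-1 * \sum_j - sin (@th d N u (x j))).
Proof.
rewrite /mu_hat; under eq_bigr do rewrite /expm2pi.
rewrite sumc -(rmorph_nat (real_complex R)) -fmorphV.
rewrite /th; simpc; congr (_ +i* _); ring.
Qed.

Lemma scale_lt (m : nat) (s v : R) : (0 < m)%N -> s < m%:R^-1 * v -> m%:R * s < v.
Proof.
move=> hm hv.
have hm0 : (0 : R) < m%:R by rewrite ltr0n.
have e : v = m%:R * (m%:R^-1 * v) by rewrite mulrA mulfV ?mul1r // pnatr_eq0 -lt0n.
by rewrite e ltr_pM2l.
Qed.
End Helpers.

Theorem lemma3p1 (R : realType) (d N m : nat) (HN : (0 < N)%N)
    (Hd : (1 <= d)%N) (Hm : (1 <= m)%N) (h : R) (Hh : 1 <= h) :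
  1 - (N%:R : R) `^ (- h) <=
  unif_prob R
    [set x : {ffun 'I_m -> {ffun 'I_d -> 'I_N}} |
      [forall u : {ffun 'I_d -> 'I_N},
        (u != grid0 d HN) ==>
        (`|mu_hat R x u| <=
           ((4 * Num.sqrt (ln (8 * (N%:R : R) `^ (d%:R + h)))
             / Num.sqrt (m%:R))%:C))]].
Proof.
set g0 := grid0 d HN.
set L := ln (8 * (N%:R : R) `^ (d%:R + h)).
set t := 4 * Num.sqrt L / Num.sqrt m%:R.
set E := [set x | _].
have hN0 : (0 : R) < N%:R by rewrite ltr0n.
have hm0 : (0 : R) < m%:R by rewrite ltr0n.
have hP : 0 < (N%:R : R) `^ (d%:R + h) := powR_gt0 _ hN0.
have hP1 : 1 <= (N%:R : R) `^ (d%:R + h).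
  have hd0 : (0 : R) <= d%:R + h.
    have : (0 : R) <= d%:R by exact: ler0n.
    lra.
  have := @ler_powR R (N%:R) _ 0 (d%:R + h) hd0.
  by rewrite powRr0; apply; rewrite ler1n.
have hL0 : 0 <= L by apply: ln_ge0; lra.
have ht0 : 0 <= t.
  by apply: divr_ge0; [apply: mulr_ge0 => //; exact: sqrtr_ge0 | exact: sqrtr_ge0].
set s := t / Num.sqrt 2.
have hs0 : 0 <= s by apply: divr_ge0 => //; exact: sqrtr_ge0.
have hs2 : s ^+ 2 = t ^+ 2 / 2 by rewrite /s expr_div_n sqr_sqrtr.
have ht2 : t ^+ 2 = 16 * L / m%:R.
  rewrite /t expr_div_n exprMn !sqr_sqrtr ?ler0n //.
  by congr (_ * _ / _); ring.
have hL : m%:R * s ^+ 2 / 8 = L.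
  rewrite hs2 ht2; field; by rewrite pnatr_eq0 -lt0n.
pose B (p : {ffun 'I_d -> 'I_N} * (bool * bool)) :=
  [set x : {ffun 'I_m -> {ffun 'I_d -> 'I_N}} | m%:R * s < \sum_j Yf R p.1 p.2 (x j)].
have key : forall x, x \in ~: E -> exists p, (p.1 != g0) && (x \in B p).
  move=> x; rewrite inE /E inE negb_forall => /existsP [u].
  rewrite negb_imply => /andP [hu hnot].
  rewrite (mu_hat_eq R d N m x u) normc_def /= lecR -ltNge in hnot.
  set a := _ * \sum_j cos _ in hnot.
  set b := _ * \sum_j - sin _ in hnot.
  have h2 : t ^+ 2 < a ^+ 2 + b ^+ 2.
    case: (lerP (a ^+ 2 + b ^+ 2) (t ^+ 2)) => // hle.
    have : Num.sqrt (a ^+ 2 + b ^+ 2) <= Num.sqrt (t ^+ 2) by rewrite ler_sqrt // sqr_ge0.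
    rewrite sqrtr_sqr ger0_norm //.
    lra.
  have hsum : forall (F : 'I_m -> R), \sum_j (-1) * F j = - \sum_j F j.
    by move=> F; rewrite -sumrN; apply: eq_bigr => j _; rewrite mulN1r.
  have hsum1 : forall (F : 'I_m -> R), \sum_j 1 * F j = \sum_j F j.
    by move=> F; apply: eq_bigr => j _; rewrite mul1r.
  have [ha|hb] : s ^+ 2 < a ^+ 2 \/ s ^+ 2 < b ^+ 2.
    case: (ltrP (s ^+ 2) (a ^+ 2)) => ha; first by left.
    right; lra.
  - case: (ltrP s a) => h1.
      exists (u, (true, true)); rewrite /= hu inE /Yf /= hsum1.
      exact: scale_lt.
    case: (ltrP a (- s)) => h3.
      exists (u, (false, true)); rewrite /= hu inE /Yf /= hsum.
      apply: scale_lt => //; rewrite mulrN; change (s < - a); lra.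
    exfalso; nra.
  - case: (ltrP s b) => h1.
      exists (u, (false, false)); rewrite /= hu inE /Yf /= hsum.
      apply: scale_lt => //; rewrite -sumrN; change (s < b); exact: h1.
    case: (ltrP b (- s)) => h3.
      exists (u, (true, false)); rewrite /= hu inE /Yf /= hsum1.
      apply: scale_lt => //.
      have eb : b = - (m%:R^-1 * \sum_j sin (th R u (x j))) by rewrite /b sumrN mulrN.
      lra.
    exfalso; nra.
pose ind p x : R := if (p.1 != g0) && (x \in B p) then 1 else 0.
have ind0 : forall p x, 0 <= ind p x by move=> p x; rewrite /ind; case: ifP => _ //.
have cnt : (#|~: E|%:R : R) <= \sum_(p : {ffun 'I_d -> 'I_N} * (bool * bool))
                           (if p.1 != g0 then #|B p|%:R else 0).
  rewrite -sumr_const.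
  apply: (@le_trans _ _ (\sum_(x in ~: E) \sum_p ind p x)).
    apply: ler_sum => x hx; case: (key x hx) => p hp.
    rewrite (bigD1 p) //= {1}/ind hp lerDl; apply: sumr_ge0 => q _; exact: ind0.
  apply: (@le_trans _ _ (\sum_x \sum_p ind p x)).
    rewrite [X in _ <= X](bigID (fun x => x \in ~: E)) /= lerDl.
    apply: sumr_ge0 => x _; apply: sumr_ge0 => q _; exact: ind0.
  rewrite exchange_big /=; apply: ler_sum => p _.
  rewrite /ind; case: (p.1 != g0) => /=; last by rewrite big1.
  by rewrite -big_mkcond /= sumr_const.
set Xc := (#|{ffun 'I_m -> {ffun 'I_d -> 'I_N}}|%:R : R).
have each : forall p, p.1 != g0 -> (#|B p|%:R : R) <= Xc * expR (- L).
  move=> p hp; rewrite -hL /Xc card_ffun card_ord natrX.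
  apply: chernoff_count => //; [move=> y; exact: Yf_bound | exact: (@Yf_sum R d N HN p.1 p.2 hp)].
have hXc : 0 < Xc.
  rewrite /Xc ltr0n; apply/card_gt0P; exists [ffun=> g0]; by [].
have hE0 : 0 <= expR (- L) := expR_ge0 _.
have cnt2 : (#|~: E|%:R : R) <= ((N ^ d)%N * 4)%:R * (Xc * expR (- L)).
  apply: le_trans cnt _.
  apply: (@le_trans _ _ (\sum_(p : {ffun 'I_d -> 'I_N} * (bool * bool)) (Xc * expR (- L)))).
    apply: ler_sum => p _; case: ifP => hp; first exact: each.
    by apply: mulr_ge0 => //; apply: ltW.
  rewrite sumr_const !card_prod card_ffun !card_ord.
  rewrite [X in _ *+ (_ * X)](_ : _ = 4%N) //.
  by rewrite -[X in X <= _]mulr_natl.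
  by rewrite card_bool.
have ePd : (N%:R : R) `^ (d%:R + h) = N%:R ^+ d * N%:R `^ h.
  rewrite powRD ?powR_mulrn ?ler0n //.
  by apply/implyP => _; rewrite pnatr_eq0 -lt0n.
have eL : expR (- L) = (8 * (N%:R ^+ d * N%:R `^ h))^-1.
  have h8 : (0 : R) < 8 * N%:R `^ (d%:R + h) by apply: mulr_gt0.
  by rewrite expRN /L lnK ?posrE // ePd.
have hPh : 0 < (N%:R : R) `^ h := powR_gt0 _ hN0.
have hNd : 0 < (N%:R : R) ^+ d by apply: exprn_gt0.
rewrite eL natrM natrX in cnt2.
have eq1 : (N%:R : R) ^+ d * 4%:R * (Xc * (8 * (N%:R ^+ d * N%:R `^ h))^-1)
         = Xc * (N%:R `^ h)^-1 / 2.
  field; apply/andP; split; apply: lt0r_neq0 => //.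
rewrite eq1 in cnt2.
have cE := cardsC E.
have eE : (#|E|%:R : R) = Xc - #|~: E|%:R by rewrite /Xc -cE natrD; ring.
rewrite /unif_prob eE ler_pdivlMr // powRN.
have : 0 <= Xc * (N%:R `^ h)^-1 by apply: mulr_ge0; [apply: ltW | rewrite invr_ge0 ltW].
lra.
Qed.
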